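(* Let $p$ be a prime, $\overline{\mathbb{F}}_p$ an algebraic closure of $\mathbb{F}_p$, and let $V$ be a finite subgroup of the additive group of $\overline{\mathbb{F}}_p$. For any finite additive subgroup $U\subseteq\overline{\mathbb{F}}_p$ put $L_U(T)=\prod_{u\in U}(T-u)$. Let $f(x)\in\overline{\mathbb{F}}_p[x]$ and $h(T,x)=L_V(T)-f(x)\in\overline{\mathbb{F}}_p[T,x]$. Then $h(T,x)$ is reducible in $\overline{\mathbb{F}}_p[T,x]$ if and only if there exist a polynomial $g(x)\in\overline{\mathbb{F}}_p[x]$ and a proper subgroup $W\subsetneq V$ such that $f(x)=L_{W'}(g(x))$, where $W'=L_W(V)=\{L_W(v):v\in V\}$.
   Context: For a finite additive subgroup $U$ of $\overline{\mathbb{F}}_p$, $L_U(T)$ is a separable $\mathbb{F}_p$-linear (additive) polynomial of degree $|U|$, and $L_U:\overline{\mathbb{F}}_p\to\overline{\mathbb{F}}_p$ is an additive homomorphism with kernel $U$. *)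

(* Defs.v *)
From HB Require Import structures.
From mathcomp Require Import all_boot all_order all_algebra.
Set Implicit Arguments. Unset Strict Implicit. Unset Printing Implicit Defensive.
Import GRing.Theory.
Local Open Scope ring_scope.

(* Every element of F is algebraic over the prime subfield {n%:R}. Together
   with F algebraically closed of characteristic p, this makes F an algebraic
   closure of F_p. *)
Definition algebraic_over_prime_field (F : fieldType) : Prop :=
  forall x : F, exists q : {poly F},
    q != 0 /\ (forall i, exists n : nat, q`_i = n%:R) /\ root q x.

Definition fin_add_subgroup (F : fieldType) (U : seq F) : Prop :=
  uniq U /\ 0 \in U /\ {in U &, forall u v, u - v \in U}.

Definition LU (F : fieldType) (U : seq F) : {poly F} :=
  \prod_(u <- U) ('X - u%:P).

Definition LU_image (F : fieldType) (W V : seq F) : seq F :=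
  undup [seq (LU W).[v] | v <- V].

Definition reducible (R : unitRingType) (h : R) : Prop :=
  exists a b : R, a \isn't a GRing.unit /\ b \isn't a GRing.unit /\ h = a * b.

(* Main.v *)
Require Import Defs.
From HB Require Import structures.
From mathcomp Require Import all_boot all_order all_algebra all_field.
From Stdlib Require Import Classical.
Import GRing.Theory.
Local Open Scope ring_scope.
Set Implicit Arguments. Unset Strict Implicit. Unset Printing Implicit Defensive.

Section Gen.
Variable R : idomainType.
Implicit Types U W V : seq R.

Definition LUg U : {poly R} := \prod_(u <- U) ('X - u%:P).
Definition subgrp U := uniq U /\ 0 \in U /\ {in U &, forall u v, u - v \in U}.

Lemma subgrpN U u : subgrp U -> u \in U -> - u \in U.
Proof. by case=> _ [U0 Us] uU; rewrite -sub0r Us. Qed.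

Lemma subgrpD U u v : subgrp U -> u \in U -> v \in U -> u + v \in U.
Proof.
move=> sU uU vU; case: (sU) => _ [_ Us].
by rewrite -[v]opprK Us // subgrpN.
Qed.

Lemma perm_shift U c : subgrp U -> c \in U -> perm_eq [seq w + c | w <- U] U.
Proof.
move=> sU cU; case: (sU) => uU [U0 Us].
apply: uniq_perm => //; first by rewrite map_inj_uniq //; exact: addIr.
move=> x; apply/mapP/idP => [[w wU ->]|xU]; first by rewrite subgrpD.
by exists (x - c); rewrite ?Us // subrK.
Qed.

Lemma LUg_monic U : LUg U \is monic.
Proof. exact: monic_prod_XsubC. Qed.

Lemma size_LUg U : size (LUg U) = (size U).+1.
Proof. by rewrite /LUg size_prod_XsubC. Qed.

Lemma hornerLUg U x : (LUg U).[x] = \prod_(u <- U) (x - u).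
Proof. by rewrite /LUg horner_prod; apply: eq_bigr => u _; rewrite hornerXsubC. Qed.

Lemma LUg_root U x : ((LUg U).[x] == 0) = (x \in U).
Proof. by rewrite -root_prod_XsubC. Qed.

Lemma LUg_inv U c u : subgrp U -> u \in U -> (LUg U).[c + u] = (LUg U).[c].
Proof.
move=> sU uU; rewrite !hornerLUg -(perm_big _ (perm_shift sU uU)) /= big_map.
by apply: eq_bigr => w _; rewrite opprD addrACA subrr addr0.
Qed.

Lemma size_sub_monic (p q : {poly R}) : p \is monic -> q \is monic ->
  size p = size q -> (size (p - q)%R < size p)%N.
Proof.
move=> mp mq spq; have sp0 : (0 < size p)%N by rewrite size_poly_gt0 monic_neq0.
have: (size (p - q)%R <= size p)%N.
  by rewrite (leq_trans (size_polyD _ _)) // size_polyN spq maxnn.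
rewrite leq_eqVlt => /orP[/eqP e|//].
have : lead_coef (p - q) = 0.
  rewrite /lead_coef e coefB {2}spq.
  by move: (monicP mp) (monicP mq); rewrite /lead_coef => -> ->; rewrite subrr.
move/eqP; rewrite lead_coef_eq0 => /eqP pq0.
by move: e; rewrite pq0 size_poly0 => e; rewrite -e in sp0.
Qed.

Lemma LUg_shift U c : subgrp U ->
  \prod_(u <- U) ('X - (c + u)%:P) = LUg U - ((LUg U).[c])%:P.
Proof.
move=> sU; case: (sU) => uniqU [U0 Us].
apply/eqP; rewrite -subr_eq0; apply/eqP.
pose rs := [seq c + u | u <- U].
have n1 : (0 < size U)%N by case: (U) U0.
apply: (@roots_geq_poly_eq0 _ _ rs).
- apply/allP => _ /mapP[u uU ->]; rewrite rootE !hornerE.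
  rewrite -(big_map (fun u => c + u) predT (fun r => 'X - r%:P)) horner_prod.
  rewrite (bigD1_seq (c + u)) ?map_f ?map_inj_uniq //=; last exact: addrI.
  by rewrite hornerXsubC subrr mul0r LUg_inv // !subrr.
- by rewrite /rs map_inj_uniq //; exact: addrI.
rewrite size_map opprB addrA addrAC.
have mP : \prod_(u <- U) ('X - (c + u)%:P) \is monic by exact: monic_prod_XsubC.
rewrite (leq_trans (size_polyD _ _)) // geq_max size_polyC.
apply/andP; split; last by case: (_ != 0).
have e : size (\prod_(u <- U) ('X - (c + u)%:P)) = (size U).+1.
  by rewrite size_prod_XsubC.
by rewrite -ltnS -e size_sub_monic ?LUg_monic // e size_LUg.
Qed.


Lemma LUg_sub U x c : subgrp U -> (LUg U).[x - c] = (LUg U).[x] - (LUg U).[c].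
Proof.
move=> sU; have e := congr1 (horner^~ x) (LUg_shift c sU).
rewrite /= hornerD hornerN hornerC in e.
rewrite -e hornerLUg horner_prod.
by apply: eq_bigr => u _; rewrite hornerXsubC opprD addrA.
Qed.

Lemma LUg0 U : subgrp U -> (LUg U).[0] = 0.
Proof. by case=> _ [U0 _]; apply/eqP; rewrite LUg_root. Qed.

Lemma LUgN U x : subgrp U -> (LUg U).[- x] = - (LUg U).[x].
Proof. by move=> sU; rewrite -[- x]sub0r LUg_sub // LUg0 // sub0r. Qed.

Lemma LUgD U x y : subgrp U -> (LUg U).[x + y] = (LUg U).[x] + (LUg U).[y].
Proof. by move=> sU; rewrite -{1}[y]opprK LUg_sub // LUgN // opprK. Qed.

Definition LUimg W V := undup [seq (LUg W).[v] | v <- V].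

Lemma subgrp_img W V : subgrp W -> subgrp V -> subgrp (LUimg W V).
Proof.
move=> sW sV; case: (sV) => uV [V0 Vs]; split; first exact: undup_uniq.
split; first by rewrite mem_undup; apply/mapP; exists 0 => //; rewrite LUg0.
move=> z1 z2; rewrite !mem_undup => /mapP[a aV ->] /mapP[b bV ->].
by apply/mapP; exists (a - b); rewrite ?Vs // LUg_sub.
Qed.

Lemma LUg_comp W V : subgrp W -> subgrp V -> {subset W <= V} ->
  LUg V = LUg (LUimg W V) \Po LUg W.
Proof.
move=> sW sV WV; case: (sV) => uV [V0 Vs].
set W' := LUimg W V; set L := LUg W.
pose rep w' := nth 0 V (index w' [seq L.[v] | v <- V]).
have repP w' : w' \in W' -> rep w' \in V /\ L.[rep w'] = w'.
  rewrite mem_undup => w'in.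
  have ilt : (index w' [seq L.[v] | v <- V] < size V)%N.
    by rewrite -(size_map (fun v => L.[v])) index_mem.
  split; first by rewrite mem_nth.
  by rewrite /rep -(nth_map 0 0 (fun v => L.[v])) // nth_index.
have -> : LUg W' \Po L = \prod_(w' <- W') (L - w'%:P).
  rewrite /LUg rmorph_prod; apply: eq_bigr => w' _.
  by change ((('X - w'%:P) \Po L) = L - w'%:P); rewrite comp_polyB comp_polyX comp_polyC.
rewrite (eq_big_seq (fun w' => \prod_(w <- W) ('X - (rep w' + w)%:P))); last first.
  by move=> w' /repP [_ e]; rewrite LUg_shift // e.
rewrite -(big_allpairs_dep (h := fun a b => rep a + b) (r1 := W') (r2 := fun _ => W) (F := fun r => 'X - r%:P)).
apply: perm_big; apply: uniq_perm => //.
  rewrite allpairs_uniq //; first exact: undup_uniq; first by case: sW.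
  move=> [a1 b1] [a2 b2] /allpairsP[[x1 y1] /= [x1in y1in [-> ->]]].
  move=> /allpairsP[[x2 y2] /= [x2in y2in [-> ->]]] /= e.
  have e2 := congr1 (fun z => L.[z]) e; move: e2 => /=.
  rewrite !LUgD // (proj2 (repP _ x1in)) (proj2 (repP _ x2in)).
  have -> : L.[y1] = 0 by apply/eqP; rewrite LUg_root.
  have -> : L.[y2] = 0 by apply/eqP; rewrite LUg_root.
  rewrite !addr0 => ex; move: e; rewrite ex => /addrI ->; done.
move=> v; apply/idP/allpairsP => [vV|[[x y] /= [xin yin ->]]]; last first.
  apply: subgrpD => //; [by case: (repP _ xin) | exact: WV].
have Lin : L.[v] \in W' by rewrite mem_undup; apply/mapP; exists v.
exists (L.[v], v - rep L.[v]) => /=; split => //; last by rewrite addrC subrK.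
have [rV rL] := repP _ Lin.
by rewrite -LUg_root LUg_sub // rL subrr.
Qed.

End Gen.

Lemma map_LUg (R S : idomainType) (phi : {rmorphism R -> S}) (U : seq R) :
  map_poly phi (LUg U) = LUg (map phi U).
Proof.
by rewrite /LUg rmorph_prod big_map; apply: eq_bigr => u _; exact: map_polyXsubC.
Qed.

Lemma subgrp_map (R S : idomainType) (phi : {rmorphism R -> S}) (U : seq R) :
  injective phi -> subgrp U -> subgrp (map phi U).
Proof.
move=> iphi [uU [U0 Us]]; split; first by rewrite map_inj_uniq.
split; first by apply/mapP; exists 0; rewrite ?rmorph0.
by move=> _ _ /mapP[a aU ->] /mapP[b bU ->]; apply/mapP; exists (a - b); rewrite ?Us ?rmorphB.
Qed.

Lemma monic_subC (R : idomainType) (Q : {poly R}) c : Q \is monic -> (1 < size Q)%N ->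
  (Q - c%:P \is monic) /\ size (Q - c%:P) = size Q.
Proof.
move=> mQ sQ; have lt : (size (- c%:P) < size Q)%N.
  by rewrite size_polyN size_polyC (leq_ltn_trans _ sQ) // leq_b1.
split; last by rewrite size_polyDl.
by rewrite monicE lead_coefDl // (monicP mQ).
Qed.

Lemma reverse_dir (F : fieldType) (V W : seq F) (g f : {poly F}) :
  fin_add_subgroup V -> fin_add_subgroup W -> {subset W <= V} ->
  (exists2 v, v \in V & v \notin W) -> f = LU (LU_image W V) \Po g ->
  reducible ((LU V) ^:P - f%:P).
Proof.
move=> sV sW WV [v0 v0V v0W] ->.
have sV' : subgrp V := sV. have sW' : subgrp W := sW.
have sI := subgrp_img sW' sV'.
have e1 : LU V = LUg (LUimg W V) \Po LUg W by exact: LUg_comp.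
rewrite e1 map_comp_poly.
set P := map_poly polyC (LUg (LUimg W V)).
set Q := map_poly polyC (LUg W).
have eP : P = LUg (map polyC (LUimg W V)) by rewrite /P map_LUg.
have eQ : Q = LUg (map polyC W) by rewrite /Q map_LUg.
have sIC := subgrp_map (polyC_inj (R := F)) sI.
have -> : LU (LU_image W V) \Po g = P.[g] by [].
have -> : P \Po Q - (P.[g])%:P = (P - (P.[g])%:P) \Po Q.
  by rewrite comp_polyB comp_polyC.
rewrite {1 2}eP -LUg_shift //.
have mQ : Q \is monic by rewrite eQ LUg_monic.
have sQ : (1 < size Q)%N.
  by rewrite eQ size_LUg size_map ltnS; case: sW => _ [W0 _]; case: (W) W0.
have fac c : (Q - c%:P \is monic) /\ size (Q - c%:P) = size Q by apply: monic_subC.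
set r := map polyC (LUimg W V).
have -> : (\prod_(u <- r) ('X - (g + u)%:P)) \Po Q = \prod_(u <- r) (Q - (g + u)%:P).
  rewrite (rmorph_prod (comp_poly Q)); apply: eq_bigr => u _.
  by change ((('X - (g + u)%:P) \Po Q) = Q - (g + u)%:P); rewrite comp_polyB comp_polyX comp_polyC.
have ur : uniq r by case: sIC.
have r0 : 0 \in r by case: sIC => _ [].
rewrite (bigD1_seq 0) //=.
exists (Q - (g + 0)%:P); exists (\prod_(u <- r | u != 0) (Q - (g + u)%:P)).
split; last split; last done.
- by rewrite poly_unitE (proj2 (fac _)) (gtn_eqF sQ).
set u1 := ((LUg W).[v0])%:P.
have u1r : u1 \in [seq u <- r | u != 0].
  rewrite mem_filter polyC_eq0 LUg_root v0W /= /r; apply: map_f.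
  by rewrite mem_undup; apply/mapP; exists v0.
rewrite -big_filter (bigD1_seq u1) ?filter_uniq //=.
set rest := \prod_(_ <- _ | _) _.
have mrest : rest \is monic by apply: monic_prod => u _; case: (fac (g + u)).
rewrite poly_unitE size_mul ?monic_neq0 //; last by case: (fac (g + u1)).
rewrite (proj2 (fac _)); apply/nandP; left.
have : (0 < size rest)%N by rewrite size_poly_gt0 monic_neq0.
by move: sQ; case: (size Q) => [|[|m]] // _; case: (size rest) => // k _; rewrite addnS.
Qed.
Section FracSec.
Local Open Scope quotient_scope.
Local Notation "x %:F" := (@FracField.tofrac _ x) (format "x %:F").

Lemma frac_repr (R : idomainType) (z : {fraction R}) :
  exists a b : R, b != 0 /\ z = a%:F / b%:F.
Proof.
elim/quotW: z => x; exists \n_x, \d_x; split; first exact: denom_ratioP.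
have d0 : (\d_x)%:F != 0 :> {fraction R}.
  rewrite tofrac_eq0; exact: denom_ratioP.
apply: (canRL (mulfK d0)).
unlock tofrac.
change (FracField.mul (\pi_{fraction R} x) (\pi_{fraction R} (Ratio \d_x 1)) = \pi_{fraction R} (Ratio \n_x 1)).
rewrite -FracField.pi_mul; apply/eqmodP; rewrite /= FracField.equivfE /FracField.mulf /=.
by rewrite !numden_Ratio ?mulf_neq0 ?oner_neq0 ?denom_ratioP // !mulr1 mulrC.
Qed.

Lemma integral_frac (F : fieldType) (P : {poly {poly F}}) (z : {fraction {poly F}}) :
  P \is monic -> (1 < size P)%N -> (map_poly (@FracField.tofrac _) P).[z] = 0 ->
  exists g : {poly F}, z = g%:F.
Proof.
move=> mP sP rz.
have [a [b [b0 ez0]]] := frac_repr z; rewrite ez0 in rz *; clear ez0 z.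
set d := gcdp a b.
have d0 : d != 0 by rewrite gcdp_eq0 negb_and b0 orbT.
set a1 := a %/ d; set b1 := b %/ d.
have ea : a = a1 * d by rewrite divpK // dvdp_gcdl.
have eb : b = b1 * d by rewrite divpK // dvdp_gcdr.
have cop : coprimep a1 b1 by apply: coprimep_div_gcd; rewrite b0 orbT.
have b10 : b1 != 0 by apply: contra b0; rewrite eb => /eqP ->; rewrite mul0r.
have dF0 : d%:F != 0 by rewrite tofrac_eq0.
have b1F0 : b1%:F != 0 by rewrite tofrac_eq0.
have ez : a%:F / b%:F = a1%:F / b1%:F.
  rewrite {1}ea {1}eb.
  rewrite tofracM [X in _ / X]tofracM.
  by rewrite invfM mulrACA (divff dF0) mulr1.
rewrite ez in rz *.
have tinj : injective (@FracField.tofrac {poly F}).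
  by move=> x y /eqP; rewrite tofrac_eq => /eqP.
set m := (size P).-1.
have szP : size P = m.+1 by rewrite /m prednK // (ltn_trans _ sP).
pose H := \sum_(i < m.+1) P`_i * a1 ^+ i * b1 ^+ (m - i).
have H0 : H = 0.
  apply: (tinj); rewrite tofrac0.
  have := congr1 (fun t => t * b1%:F ^+ m) rz.
  rewrite mul0r (@horner_coef_wide _ m.+1); first last.
    by rewrite (size_map_inj_poly tinj (rmorph0 _)) szP.
  rewrite mulr_suml => <-.
  rewrite /H rmorph_sum; apply: eq_bigr => i _.
  rewrite !rmorphM !rmorphXn coef_map -!mulrA; congr (_ * _).
  have ilem : (i <= m)%N by rewrite -ltnS.
  move: ilem; move: (nat_of_ord i) => k klem.
  rewrite [in RHS](_ : m = k + (m - k))%N; last by rewrite subnKC.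
  rewrite exprD mulrA; congr (_ * _).
  by rewrite exprMn exprVn (mulfVK (expf_neq0 k b1F0)).
have hm : (0 < m)%N by rewrite -ltnS -szP.
pose H' := \sum_(i < m) P`_i * a1 ^+ i * b1 ^+ (m - i.+1).
have eH : H = a1 ^+ m + b1 * H'.
  rewrite /H big_ord_recr /= subnn expr0 mulr1 addrC; congr (_ + _).
    have : lead_coef P = 1 by apply/monicP.
    by rewrite lead_coefE szP /= => ->; rewrite mul1r.
  rewrite /H' mulr_sumr; apply: eq_bigr => i _ /=.
  by rewrite -(subnSK (ltn_ord i)) exprS mulrCA.
have dv : b1 %| a1 ^+ m.
  have -> : a1 ^+ m = b1 * (- H') by rewrite mulrN; apply/eqP; rewrite -addr_eq0 -eH H0.
  exact: dvdp_mulIl.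
have cop' : coprimep b1 (a1 ^+ m) by rewrite coprimep_expr // coprimep_sym.
have : b1 %| 1 by rewrite -(Gauss_dvdpl _ cop') mul1r.
rewrite dvdp1 => /eqP sb1.
have eb1 : b1 = (b1`_0)%:P by apply: size1_polyC; rewrite sb1.
set c := b1`_0 in eb1.
have c0 : c != 0 by apply: contra b10; rewrite eb1 => /eqP ->.
exists (a1 * (c^-1)%:P).
apply: (canLR (mulfK b1F0)).
rewrite -rmorphM -mulrA eb1 -polyCM (mulVf c0) mulr1.
by [].
Qed.

End FracSec.

Section Q.
Variable K : fieldType.
Variable A : {poly K}.
Hypothesis hmi : monic_irreducible_poly A.
Local Notation E := {poly %/ A with hmi}.
Definition kap : K -> E := qfpoly_const hmi.
HB.instance Definition _ := GRing.RMorphism.copy kap (qpolyC A).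
Definition theta : E := in_qpoly A 'X.
Check (map_poly kap : {poly K} -> {poly E}).
Lemma kap_inj : injective kap. Proof. exact: fmorph_inj. Qed.

Lemma in_qpolyC c : in_qpoly A c%:P = qpolyC A c.
Proof.
apply: val_inj; rewrite /= Pdiv.CommonRing.rmodp_small // size_polyC.
by apply: leq_ltn_trans (size_mk_monic_gt1 A); rewrite leq_b1.
Qed.

Lemma in_qpoly_eq0 q : (in_qpoly A q == 0) = (A %| q).
Proof.
have hM : A \is monic by case: hmi.
apply/eqP/idP => [/val_eqP /= | hDp].
  by rewrite -Pdiv.IdomainMonic.modpE // mk_monicE.
by apply/val_eqP; rewrite /= -Pdiv.IdomainMonic.modpE // mk_monicE.
Qed.

Lemma qf_eval q c : (map_poly kap q).[theta + kap c] = in_qpoly A (q \Po ('X + c%:P)) :> E.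
Proof.
have := in_qpoly_comp_horner A q ('X + c%:P).
by rewrite in_qpolyD in_qpolyC => ->.
Qed.

Lemma qf_root q c : root (map_poly kap q) (theta + kap c) = (A %| q \Po ('X + c%:P)).
Proof. by rewrite rootE qf_eval in_qpoly_eq0. Qed.
End Q.

Lemma shift_comp (R : comNzRingType) (c d : R) :
  ('X + c%:P) \Po ('X + d%:P) = 'X + (d + c)%:P.
Proof. by rewrite comp_polyD comp_polyX comp_polyC polyCD addrA. Qed.

Lemma shift_sub (R : comNzRingType) (A : {poly R}) (c d : R) :
  A \Po ('X + c%:P) = A -> A \Po ('X + d%:P) = A -> A \Po ('X + (c - d)%:P) = A.
Proof.
move=> hc hd.
have hnd : A \Po ('X + (- d)%:P) = A.
  by rewrite -{1}hd -comp_polyA shift_comp addNr addr0 comp_polyXr.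
rewrite (_ : 'X + (c - d)%:P = ('X + c%:P) \Po ('X + (- d)%:P)); last by rewrite shift_comp (addrC (- d)).
by rewrite comp_polyA hc hnd.
Qed.

Lemma dvdp_shift (K : fieldType) (A : {poly K}) (c : K) : A \is monic ->
  (A %| A \Po ('X + c%:P)) = (A \Po ('X + c%:P) == A).
Proof.
move=> mA; apply/idP/eqP => [dv|->]; last exact: dvdpp.
have s2 : size ('X + c%:P) = 2 by rewrite size_XaddC.
have sz : size A = size (A \Po ('X + c%:P)) by rewrite size_comp_poly2.
have mA' : A \Po ('X + c%:P) \is monic.
  rewrite monicE lead_coef_comp ?s2 // (monicP mA) mul1r.
  by rewrite lead_coefXaddC expr1n.
apply/eqP; rewrite eq_sym -eqp_monic //; rewrite -dvdp_size_eqp //; by rewrite sz.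
Qed.

Lemma irr_factor (K : fieldType) (a : {poly K}) : (1 < size a)%N ->
  exists A, [/\ irreducible_poly A, A \is monic & A %| a].
Proof.
suff: forall n (a : {poly K}), (size a <= n)%N -> (1 < size a)%N ->
  exists A, [/\ irreducible_poly A, A \is monic & A %| a] by apply; apply: leqnn.
clear a; elim=> [|n IH] a sa s1; first by move: (leq_trans s1 sa).
have a0 : a != 0 by rewrite -size_poly_gt0 (ltn_trans _ s1).
have l0 : lead_coef a != 0 by rewrite lead_coef_eq0.
have li0 : (lead_coef a)^-1 != 0 by rewrite invr_eq0.
case: (classic (irreducible_poly a)) => [ia | nia].
  exists ((lead_coef a)^-1 *: a); split.
  - split; first by rewrite size_scale.
    move=> q sq; rewrite dvdpZr // => /(ia.2 q sq) qa.
    by apply: eqp_trans qa _; rewrite eqp_sym eqp_scale.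
  - by rewrite monicE lead_coefZ mulVf.
  - by rewrite dvdpZl.
have [q [sq qa nqa]] : exists q : {poly K}, [/\ size q != 1, q %| a & ~~ (q %= a)].
  apply: NNPP => hn; apply: nia; split => // q sq qa.
  by apply: NNPP => nq; apply: hn; exists q; split => //; apply/negP.
have q0 : q != 0 by apply: contra a0 => /eqP q0; move: qa; rewrite q0 dvd0p.
have sqa : (size q < size a)%N.
  by rewrite ltn_neqAle dvdp_leq // andbT dvdp_size_eqp.
have sq1 : (1 < size q)%N by rewrite ltn_neqAle eq_sym sq size_poly_gt0.
have [A [iA mA Aq]] := IH q (leq_trans sqa sa) sq1.
by exists A; split => //; apply: dvdp_trans Aq qa.
Qed.

Lemma forward_core (F K : fieldType) (iota : {rmorphism F -> K}) (V : seq F)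
  (fK : K) (A : {poly K}) :
  subgrp V -> irreducible_poly A -> A \is monic ->
  A %| LUg (map iota V) - fK%:P -> (size A <= size V)%N ->
  exists S : seq F, exists gK : K,
    [/\ subgrp S, {subset S <= V}, (exists2 v, v \in V & v \notin S)
      & (LUg (map iota (LUimg S V))).[gK] = fK].
Proof.
move=> sV iA mA dA sA.
have hmi : monic_irreducible_poly A by [].
have jinj : injective (kap hmi \o iota) by apply: fmorph_inj.
have kinj : injective (kap hmi) by apply: fmorph_inj.
have iinj : injective iota by apply: fmorph_inj.
set VE := map (kap hmi \o iota) V.
have sVE : subgrp VE by apply: subgrp_map.
have eh : map_poly (kap hmi) (LUg (map iota V) - fK%:P) = LUg VE - (kap hmi fK)%:P.
  by rewrite rmorphB /= (map_polyC (kap hmi)) map_LUg -map_comp.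
have rt : root (map_poly (kap hmi) (LUg (map iota V) - fK%:P)) (theta hmi).
  have := qf_root hmi (LUg (map iota V) - fK%:P) 0.
  by rewrite rmorph0 addr0 addr0 comp_polyXr dA.
have Lth : (LUg VE).[theta hmi] = kap hmi fK.
  by move: rt; rewrite eh rootE hornerD hornerN hornerC subr_eq0 => /eqP.
have eprod : map_poly (kap hmi) (LUg (map iota V) - fK%:P) = \prod_(u <- VE) ('X - (theta hmi + u)%:P).
  by rewrite eh (LUg_shift (theta hmi) sVE) Lth.
have dE : map_poly (kap hmi) A %| \prod_(u <- VE) ('X - (theta hmi + u)%:P).
  by rewrite -eprod dvdp_map.
have [m em] := dvdp_prod_XsubC dE.
set S := mask m V.
have eSE : mask m VE = map (kap hmi \o iota) S by rewrite /S map_mask.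
have eA : map_poly (kap hmi) A = \prod_(u <- map (kap hmi \o iota) S) ('X - (theta hmi + u)%:P).
  apply/eqP; rewrite -eqp_monic ?map_monic //; first by rewrite -eSE.
  exact: monic_prod_XsubC.
have memS v : (v \in S) = (A \Po ('X + (iota v)%:P) == A).
  rewrite -dvdp_shift // -qf_root eA.
  rewrite -(big_map (fun u => theta hmi + u) predT (fun r => 'X - r%:P)) root_prod_XsubC.
  rewrite (mem_map (@addrI _ (theta hmi))).
  by rewrite (mem_map jinj).
have SV : {subset S <= V} by move=> x; apply: mem_mask.
have sS : subgrp S.
  case: (sV) => uV [V0 Vs]; split; first exact: mask_uniq.
  split; first by rewrite memS rmorph0 addr0 comp_polyXr.
  move=> s t sS tS; rewrite memS rmorphB; apply/eqP; apply: shift_sub; apply/eqP.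
    by rewrite -memS.
  by rewrite -memS.
have sSE : subgrp (map (kap hmi \o iota) S) by apply: subgrp_map.
have eA2 : map_poly (kap hmi) A = LUg (map (kap hmi \o iota) S)
   - ((LUg (map (kap hmi \o iota) S)).[theta hmi])%:P by rewrite eA LUg_shift.
have LS : (LUg (map (kap hmi \o iota) S)).[theta hmi] = kap hmi (- A`_0).
  have := congr1 (fun p : {poly {poly %/ A with hmi}} => p`_0) eA2.
  rewrite coef_map coefB coefC /= -[(LUg _)`_0]horner_coef0 (LUg0 sSE) sub0r => e.
  by rewrite rmorphN -[X in _ = - X]/(kap hmi A`_0) e opprK.
exists S, (- A`_0); split => //.
- case: (boolP (all (fun v => v \in S) V)) => [/allP allS | /allPn [v vV vS]]; last by exists v.
  have : (size V <= size S)%N by apply: uniq_leq_size; [case: sV | exact: allS].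
  have := congr1 (fun p : {poly {poly %/ A with hmi}} => size p) eA.
  rewrite size_map_poly size_prod_XsubC size_map => eAs.
  by rewrite leqNgt -ltnS -eAs ltnS sA.
have ec := LUg_comp sS sV SV.
have := congr1 (fun p => (map_poly (kap hmi \o iota) p).[theta hmi]) ec.
rewrite /= map_comp_poly !map_LUg horner_comp.
rewrite LS Lth => e; apply: kinj; rewrite e.
have h2 : kap hmi ((LUg (map iota (LUimg S V))).[- A`_0]) =
  (LUg (map (kap hmi \o iota) (LUimg S V))).[kap hmi (- A`_0)].
  by rewrite -horner_map map_LUg -map_comp.
exact: h2.
Qed.

Local Notation "x %:F" := (@FracField.tofrac _ x) (format "x %:F").

Lemma reducible_sizes (R : idomainType) (h a b : {poly R}) : h \is monic ->
  h = a * b -> a \isn't a GRing.unit -> b \isn't a GRing.unit ->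
  (1 < size a)%N /\ (1 < size b)%N.
Proof.
move=> mh eh na nb.
have h0 : h != 0 by apply: monic_neq0.
have a0 : a != 0 by apply: contra h0; rewrite eh => /eqP ->; rewrite mul0r.
have b0 : b != 0 by apply: contra h0; rewrite eh => /eqP ->; rewrite mulr0.
have lh : lead_coef a * lead_coef b = 1 by rewrite -lead_coefM -eh (monicP mh).
have key (c : {poly R}) : c != 0 -> c \isn't a GRing.unit -> lead_coef c \is a GRing.unit -> (1 < size c)%N.
  move=> c0 nc uc; rewrite ltn_neqAle eq_sym size_poly_gt0 c0 andbT.
  apply: contra nc => /eqP sc; rewrite poly_unitE sc eqxx /=.
  by move: uc; rewrite lead_coefE sc.
have u1 : lead_coef a * lead_coef b \is a GRing.unit by rewrite lh unitr1.
rewrite unitrM in u1; case/andP: u1 => ua ub.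
by split; apply: key.
Qed.

Definition iot (F : fieldType) : F -> {fraction {poly F}} :=
  (@FracField.tofrac {poly F}) \o polyC.

Lemma forward_dir (F : fieldType) (V : seq F) (f : {poly F}) :
  fin_add_subgroup V -> reducible ((LU V) ^:P - f%:P) ->
  exists (g : {poly F}) (W : seq F),
        [/\ fin_add_subgroup W, {subset W <= V}, (exists2 v, v \in V & v \notin W)
          & f = LU (LU_image W V) \Po g].
Proof.
move=> sV0 [a [b [na [nb eh]]]].
have sV : subgrp V := sV0.
have tinj : injective (@FracField.tofrac {poly F}).
  by move=> x y /eqP; rewrite tofrac_eq => /eqP.
have mt (U : seq F) : map_poly (@FracField.tofrac {poly F}) ((LUg U)^:P) = LUg (map (@iot F) U).
  by rewrite -map_poly_comp map_LUg.
have mtf (U : seq F) : map_poly (@FracField.tofrac {poly F}) ((LUg U)^:P - f%:P)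
    = LUg (map (@iot F) U) - (f%:F)%:P.
  by rewrite rmorphB /= mt map_polyC.
have mon (U : seq F) : subgrp U -> ((LUg U)^:P - f%:P \is monic) /\ size ((LUg U)^:P - f%:P) = (size U).+1.
  move=> sU; rewrite map_LUg.
  have s1 : (1 < size (LUg (map polyC U)))%N.
    by rewrite size_LUg size_map ltnS; case: sU => _ [U0 _]; case: (U) U0.
  by have [m s] := monic_subC f (LUg_monic _) s1; split => //; rewrite s size_LUg size_map.
have [mh sh] := mon V sV.
have [sa sb] := reducible_sizes mh eh na nb.
have b0 : b != 0 by rewrite -size_poly_gt0 (ltn_trans _ sb).
have a0 : a != 0 by rewrite -size_poly_gt0 (ltn_trans _ sa).
have sah : (size a < size V + 1)%N.
  rewrite addn1 -sh eh size_mul //.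
  by move: sb; case: (size b) => [|[|k]] // _; rewrite !addnS /= ltnS leq_addr.
set aK := map_poly (@FracField.tofrac {poly F}) a.
have saK : size aK = size a by rewrite (size_map_inj_poly tinj (rmorph0 _)).
have [A [iA mA Aa]] : exists A, [/\ irreducible_poly A, A \is monic & A %| aK].
  by apply: irr_factor; rewrite saK.
have ehK : map_poly (@FracField.tofrac {poly F}) ((LUg V)^:P - f%:P) = aK * map_poly (@FracField.tofrac {poly F}) b.
  by rewrite -rmorphM -eh.
have dA : A %| LUg (map (@iot F) V) - (f%:F)%:P.
  by rewrite -mtf ehK; apply: dvdp_trans Aa (dvdp_mulIl _ _).
have aK0 : aK != 0 by rewrite -size_poly_gt0 saK (ltn_trans _ sa).
have sA : (size A <= size V)%N.
  by apply: leq_trans (dvdp_leq aK0 Aa) _; rewrite saK -ltnS -[(size V).+1]addn1.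
have [S [gK [sS SV [v vV vS] eq]]] := forward_core sV iA mA dA sA.
have sW := subgrp_img sS sV.
have [mP sP] := mon _ sW.
have [g eg] : exists g : {poly F}, gK = g%:F.
  apply: (integral_frac mP); first by rewrite sP ltnS; case: sW => _ [W0 _]; case: (LUimg S V) W0.
  by rewrite mtf hornerD hornerN hornerC eq subrr.
exists g, S; split => //.
- by exists v.
apply: (tinj); rewrite -eq eg -mt horner_map.
by [].
Qed.

Unset Implicit Arguments.

Theorem proposition4p8 (p : nat) (F : closedFieldType)
  (Hp : prime p) (HpF : p \in [pchar F])
  (Halg : algebraic_over_prime_field F)
  (V : seq F) (HV : fin_add_subgroup V) (f : {poly F}) :
  reducible ((LU V) ^:P - f%:P)
  <-> exists (g : {poly F}) (W : seq F),
        [/\ fin_add_subgroup W, {subset W <= V}, (exists2 v, v \in V & v \notin W)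
          & f = LU (LU_image W V) \Po g].
Proof.
split => [hr | [g [W [sW WV ex eq]]]].
- exact: forward_dir HV hr.
- exact: reverse_dir HV sW WV ex eq.
Qed.
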